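(* Let $\mathbf A,\mathbf B\in\mathbb C^{n\times n}$, $k=\operatorname{Ind}\mathbf A$, $r=\operatorname{rank}\mathbf A^{k}$, and for $l\ge 0$ let $\check{\mathbf B}^{(l)}=\mathbf B\mathbf A^{l}=(\check b^{(l)}_{ij})$ with $i$-th row $\check{\mathbf b}^{(l)}_{i.}$ (so $\check{\mathbf B}^{(0)}=\mathbf B=(b_{ij})$). Let \[\mathbf X(t)=\mathbf B\mathbf A^{D}+\sum_{s=1}^{k}\frac{(-1)^{s-1}}{s!}\left(\mathbf B\mathbf A^{s-1}-\mathbf B\mathbf A^{s}\mathbf A^{D}\right)t^{s}\] (the partial solution of $\mathbf X'+\mathbf X\mathbf A=\mathbf B$). Writing $\Delta=\sum_{\alpha\in I_{r,n}}\left|(\mathbf A^{k+1})^{\alpha}_{\alpha}\right|$ and $N_{ij}(l)=\sum_{\alpha\in I_{r,n}\{j\}}\left|\left(\mathbf A^{k+1}_{j.}(\check{\mathbf b}^{(l)}_{i.})\right)^{\alpha}_{\alpha}\right|$, the entries of $\mathbf X(t)=(x_{ij})$ are, for all $i,j=1,\dots,n$, \[x_{ij}=\frac{N_{ij}(k)}{\Delta}+\sum_{s=1}^{k}\frac{(-1)^{s-1}}{s!}\left(\check b^{(s-1)}_{ij}-\frac{N_{ij}(k+s)}{\Delta}\right)t^{s}.\]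
   Context: $\operatorname{Ind}\mathbf A$ is the smallest nonnegative $k$ with $\operatorname{rank}\mathbf A^{k+1}=\operatorname{rank}\mathbf A^{k}$; the Drazin inverse $\mathbf A^{D}$ is the unique $\mathbf X$ with $\mathbf A^{k+1}\mathbf X=\mathbf A^{k}$, $\mathbf X\mathbf A\mathbf X=\mathbf X$, $\mathbf A\mathbf X=\mathbf X\mathbf A$. $\mathbf M_{j.}(\mathbf c)$ denotes $\mathbf M$ with its $j$-th row replaced by the row vector $\mathbf c$. $I_{r,n}$ is the set of strictly increasing sequences of $r$ elements of $\{1,\dots,n\}$, $I_{r,n}\{j\}=\{\alpha\in I_{r,n}:j\in\alpha\}$, $\mathbf M^{\alpha}_{\alpha}$ is the principal submatrix indexed by $\alpha$, $|\cdot|$ is the determinant. *)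

(* Defs.v *)
(* matrices over C = R[i] (complex numbers over an arbitrary
   real field R : realType from MathComp-Analysis, i.e. a model of the reals). *)
From HB Require Import structures.
From mathcomp Require Import all_boot all_order all_algebra.
From mathcomp Require Import reals.
From mathcomp Require Import complex.
Set Implicit Arguments. Unset Strict Implicit. Unset Printing Implicit Defensive.
Import Order.TTheory GRing.Theory Num.Theory.
Local Open Scope ring_scope.

Section Defs.
Variable F : fieldType.
Variable n : nat.

Definition is_index (A : 'M[F]_n) (k : nat) : Prop :=
  \rank (A ^+ k.+1) = \rank (A ^+ k) /\
  (forall m : nat, (m < k)%N -> \rank (A ^+ m.+1) <> \rank (A ^+ m)).

Definition is_drazin (A X : 'M[F]_n) : Prop :=
  exists k, is_index A k /\
  A ^+ k.+1 *m X = A ^+ k /\ X *m A *m X = X /\ A *m X = X *m A.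

Definition row_repl (M : 'M[F]_n) (j : 'I_n) (c : 'rV[F]_n) : 'M[F]_n :=
  \matrix_(p, q) if p == j then c 0 q else M p q.

(* principal submatrix M^alpha_alpha, alpha given as a subset of indices
   (listed in increasing order) *)
Definition principal (M : 'M[F]_n) (S : {set 'I_n}) : 'M[F]_#|S| :=
  \matrix_(p, q) M (enum_val p) (enum_val q).

Definition sum_pminors (M : 'M[F]_n) (r : nat) : F :=
  \sum_(S : {set 'I_n} | #|S| == r) \det (principal M S).

Definition sum_pminors_j (M : 'M[F]_n) (r : nat) (j : 'I_n) : F :=
  \sum_(S : {set 'I_n} | (#|S| == r) && (j \in S)) \det (principal M S).
End Defs.

(* Main.v *)
Require Import Defs.
From HB Require Import structures.
From mathcomp Require Import all_boot all_order all_algebra.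
From mathcomp Require Import reals.
From mathcomp Require Import complex.
From mathcomp Require Import fingroup perm ring.
Set Implicit Arguments. Unset Strict Implicit. Unset Printing Implicit Defensive.
Import Order.TTheory GRing.Theory Num.Theory.
Local Open Scope ring_scope.
Section CB.
Variable F : fieldType.

Definition Fn r n (Y : 'M[F]_(r,n)) (X : 'M[F]_(n,r)) (f : {ffun 'I_r -> 'I_n}) :=
  (\prod_i Y i (f i)) * \det (\matrix_(i, j) X (f i) j).

Lemma det_expand r n (Y : 'M[F]_(r,n)) (X : 'M[F]_(n,r)) :
  \det (Y *m X) = \sum_(f : {ffun 'I_r -> 'I_n}) Fn Y X f.
Proof.
rewrite /Fn /determinant.
under eq_bigr => s _ do under eq_bigr => i _ do rewrite mxE.
transitivity (\sum_(s : 'S_r) \sum_(f : {ffun 'I_r -> 'I_n})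
   (-1) ^+ s * \prod_i (Y i (f i) * X (f i) (s i))).
  apply: eq_bigr => s _; rewrite -big_distrr /=; congr (_ * _).
  by rewrite bigA_distr_bigA.
rewrite exchange_big; apply: eq_bigr => f _ /=.
rewrite big_distrr /=; apply: eq_bigr => s _.
rewrite big_split /= mulrCA; congr (_ * (_ * _)).
by apply: eq_bigr => i _; rewrite mxE.
Qed.

Lemma Fn_noninj r n (Y : 'M[F]_(r,n)) (X : 'M[F]_(n,r)) (f : {ffun 'I_r -> 'I_n}) :
  ~~ injectiveb f -> Fn Y X f = 0.
Proof.
case/injectivePn => i1 [i2 Di12 Ef12].
by rewrite /Fn (determinant_alternate Di12) ?mulr0 // => j; rewrite !mxE Ef12.
Qed.
End CB.

Section CB2.
Variable F : fieldType.
Variables n r : nat.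

Definition gS (S : {set 'I_n}) (h : #|S| = r) (q : 'I_r) : 'I_n :=
  enum_val (cast_ord (esym h) q).

Lemma gS_inj (S : {set 'I_n}) (h : #|S| = r) : injective (@gS S h).
Proof. by move=> p q /enum_val_inj /cast_ord_inj. Qed.

Lemma gS_in (S : {set 'I_n}) (h : #|S| = r) q : @gS S h q \in S.
Proof. exact: enum_valP. Qed.

Lemma gS_surj (S : {set 'I_n}) (h : #|S| = r) i : i \in S -> exists q, @gS S h q = i.
Proof.
move=> Hi; exists (cast_ord h (enum_rank_in Hi i)).
by rewrite /gS cast_ordK enum_rankK_in.
Qed.

Lemma det_cast m (e : m = r) (W : 'M[F]_m) (P Q : 'M[F]_r) :
  (forall p q, W p q = (P *m Q) (cast_ord e p) (cast_ord e q)) ->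
  \det W = \det P * \det Q.
Proof.
case: r / e P Q => P Q HW; rewrite -det_mulmx; congr (\det _).
by apply/matrixP => p q; rewrite HW !cast_ord_id.
Qed.

Lemma principal_det (X : 'M[F]_(n,r)) (Y : 'M[F]_(r,n)) (S : {set 'I_n}) (h : #|S| = r) :
  \det (principal (X *m Y) S) =
  \sum_(g : {ffun 'I_r -> 'I_r}) Fn Y X [ffun i => @gS S h (g i)].
Proof.
rewrite (@det_cast _ h _ (\matrix_(i,j) X (gS h i) j) (\matrix_(i,j) Y i (gS h j))).
  rewrite mulrC -det_mulmx det_expand; apply: eq_bigr => g _.
  rewrite /Fn; congr (_ * _).
    by apply: eq_bigr => i _; rewrite !mxE ffunE.
  by congr (\det _); apply/matrixP => i j; rewrite !mxE ffunE.
move=> p q; rewrite !mxE; apply: eq_bigr => l _; rewrite !mxE /gS !cast_ordK.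
by [].
Qed.
End CB2.

Lemma cauchy_binet (F : fieldType) n r (X : 'M[F]_(n,r)) (Y : 'M[F]_(r,n)) :
  sum_pminors (X *m Y) r = \det (Y *m X).
Proof.
rewrite /sum_pminors det_expand (bigID (fun f : {ffun 'I_r -> 'I_n} => injectiveb f)) /=.
rewrite [X in _ + X]big1 ?addr0; last by move=> f; apply: Fn_noninj.
rewrite (partition_big (fun f : {ffun 'I_r -> 'I_n} => f @: [set: 'I_r])
          (fun S => #|S| == r)) /=; last first.
  by move=> f /injectiveP injf; rewrite card_imset // cardsT card_ord.
apply: eq_bigr => S /eqP h; rewrite (principal_det X Y h); symmetry.
rewrite (bigID (fun g : {ffun 'I_r -> 'I_r} => injectiveb g)) /=.
rewrite [X in _ = _ + X]big1 ?addr0; last first.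
  move=> g ng; apply: Fn_noninj; apply: contra ng => /injectiveP ig.
  by apply/injectiveP => a b E; apply: ig; rewrite !ffunE E.
rewrite (reindex_onto (fun g : {ffun 'I_r -> 'I_r} => [ffun i => @gS _ _ S h (g i)])
          (fun f : {ffun 'I_r -> 'I_n} => [ffun i => odflt i [pick q | @gS _ _ S h q == f i]])) /=; last first.
  move=> f /andP[_ /eqP imf]; apply/ffunP => i; rewrite !ffunE.
  case: pickP => [q /eqP //|none].
  have: f i \in S by rewrite -imf imset_f ?inE.
  by case/(gS_surj h) => q Eq; move: (none q); rewrite Eq eqxx.
apply: eq_bigl => g.
have -> : ([ffun i => odflt i [pick q | gS h q == [ffun i0 => gS h (g i0)] i]] == g) = true.
  apply/eqP/ffunP => i; rewrite !ffunE; case: pickP => [q /eqP|none].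
    by rewrite ?ffunE => /gS_inj.
  by move: (none (g i)); rewrite ?ffunE eqxx.
rewrite andbT; apply/andP/idP => [[/injectiveP ig _]|/injectiveP ig].
  by apply/injectiveP => a b E; apply: ig; rewrite !ffunE E.
have ihg : injective [ffun i => gS h (g i)].
  by move=> a b; rewrite !ffunE => /gS_inj /ig.
split; first exact/injectiveP.
rewrite eqEcard card_imset // cardsT card_ord h leqnn andbT.
by apply/subsetP => x /imsetP[a _ ->]; rewrite ffunE gS_in.
Qed.

Lemma det_rank1 (F : fieldType) m (u : 'cV[F]_m) (b : 'rV[F]_m) :
  \det (1%:M + u *m b) = 1 + (b *m u) 0 0.
Proof.
have E1 : block_mx 1%:M 0 (-b) 1%:M *m block_mx 1%:M u 0 (1%:M + b *m u)
          = block_mx 1%:M u (-b) 1%:M :> 'M[F]_(m + 1).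
  rewrite mulmx_block !mul1mx !mulmx1 ?mul0mx ?mulmx0 ?addr0 ?add0r.
  by rewrite mulNmx addrCA addNr addr0.
have E2 : block_mx (1%:M + u *m b) u 0 1%:M *m block_mx 1%:M 0 (-b) 1%:M
          = block_mx 1%:M u (-b) 1%:M :> 'M[F]_(m + 1).
  rewrite mulmx_block !mul1mx !mulmx1 ?mul0mx ?mulmx0 ?addr0 ?add0r.
  by rewrite mulmxN addrK.
have E := congr1 determinant (etrans E1 (esym E2)).
rewrite !det_mulmx in E.
rewrite !det_lblock !det_ublock !det1 !mul1r !mulr1 in E.
by rewrite -E det_mx11 !mxE eqxx.
Qed.

Section Key.
Variable F : fieldType.
Variables n m : nat.

Definition rrep (P : 'M[F]_(n,m)) (j : 'I_n) (v : 'rV[F]_m) : 'M[F]_(n,m) :=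
  \matrix_(p, q) if p == j then v 0 q else P p q.

Lemma rrep_eq (X : 'M[F]_(n,m)) j v :
  rrep X j v = X + delta_mx j 0 *m (v - row j X).
Proof.
apply/matrixP => p q; rewrite !mxE big_ord1 !mxE eqxx andbT.
case: eqP => [->|_]; last by rewrite mul0r addr0.
by rewrite mul1r addrC subrK.
Qed.

Lemma row_repl_mul (X : 'M[F]_(n,m)) (Y : 'M[F]_(m,n)) j v :
  row_repl (X *m Y) j (v *m Y) = rrep X j v *m Y.
Proof.
apply/matrixP => p q; rewrite !mxE; case: eqP => E; rewrite ?mxE;
  apply: eq_bigr => l _; rewrite !mxE ?E ?eqxx //.
by case: eqP.
Qed.

Lemma sum_split (M : 'M[F]_n) j :
  sum_pminors M m = sum_pminors_j M m j +
    \sum_(S : {set 'I_n} | (#|S| == m) && (j \notin S)) \det (principal M S).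
Proof. by rewrite /sum_pminors /sum_pminors_j (bigID (fun S : {set 'I_n} => j \in S)) /=. Qed.

Lemma principal_notin (M : 'M[F]_n) j c (S : {set 'I_n}) :
  j \notin S -> principal (row_repl M j c) S = principal M S.
Proof.
move=> jS; apply/matrixP => p q; rewrite !mxE.
case: eqP => // E; move: (enum_valP p); rewrite E => jS'.
by rewrite jS' in jS.
Qed.

Lemma pminors_j0 (M : 'M[F]_n) j : sum_pminors_j (row_repl M j 0) m j = 0.
Proof.
apply: big1 => S /andP[_ jS].
rewrite (expand_det_row _ (enum_rank_in jS j)); apply: big1 => l _.
by rewrite !mxE enum_rankK_in // eqxx mul0r.
Qed.

Lemma key (X : 'M[F]_(n,m)) (Y : 'M[F]_(m,n)) j (v : 'rV[F]_m) :
  Y *m X \in unitmx ->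
  sum_pminors_j (row_repl (X *m Y) j (v *m Y)) m j =
  \det (Y *m X) * (v *m invmx (Y *m X) *m Y) 0 j.
Proof.
move=> hW; set W := Y *m X.
have T0 : forall c, \sum_(S : {set 'I_n} | (#|S| == m) && (j \notin S))
      \det (principal (row_repl (X *m Y) j c) S) =
    \sum_(S : {set 'I_n} | (#|S| == m) && (j \notin S)) \det (principal (X *m Y) S).
  by move=> c; apply: eq_bigr => S /andP[_ jS]; rewrite principal_notin.
have Nj : forall c, sum_pminors_j (row_repl (X *m Y) j c) m j =
    sum_pminors (row_repl (X *m Y) j c) m -
    \sum_(S : {set 'I_n} | (#|S| == m) && (j \notin S)) \det (principal (X *m Y) S).
  by move=> c; rewrite (sum_split _ j) T0 addrK.
have Z := pminors_j0 (X *m Y) j.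
rewrite Nj in Z; move/eqP: Z; rewrite subr_eq0 => /eqP Z.
rewrite Nj -Z -(mul0mx 1 Y) !row_repl_mul !cauchy_binet !rrep_eq.
have H : forall (w : 'rV[F]_m), \det (Y *m (X + delta_mx j 0 *m (w - row j X))) =
   \det W * (1 + ((w - row j X) *m (invmx W *m (Y *m delta_mx j (0 : 'I_1)))) 0 0).
  move=> w; rewrite mulmxDr -/W mulmxA.
  have -> : W + Y *m delta_mx j 0 *m (w - row j X) =
            W *m (1%:M + invmx W *m (Y *m delta_mx j 0) *m (w - row j X)).
    by rewrite [RHS]mulmxDr mulmx1 !mulmxA mulmxV // mul1mx.
  by rewrite det_mulmx det_rank1.
rewrite !H -mulrBr; congr (_ * _).
rewrite !mulmxBl mul0mx.
have -> : (v *m invmx W *m Y) 0 j = (v *m (invmx W *m (Y *m delta_mx j (0 : 'I_1)))) 0 0.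
  by rewrite !mulmxA -colE [RHS]mxE.
set P := v *m _; set Q := row j X *m _.
rewrite !mxE; ring.
Qed.
End Key.

Local Open Scope complex_scope.

Lemma index_uniq (F : fieldType) n (A : 'M[F]_n) k k' :
  is_index A k -> is_index A k' -> k = k'.
Proof.
move=> [E1 H1] [E2 H2]; case: (ltngtP k k') => // hk.
  by case: (H2 _ hk).
by case: (H1 _ hk).
Qed.

Unset Implicit Arguments.

Theorem theorem5p3 (R : realType) (n : nat) (A B AD : 'M[R[i]]_n) (k : nat)
    (t : R) :
  is_index A k -> is_drazin A AD ->
  let r := \rank (A ^+ k) in
  let Delta := sum_pminors (A ^+ k.+1) r in
  let N := fun (i j : 'I_n) (l : nat) =>
    sum_pminors_j (row_repl (A ^+ k.+1) j (row i (B *m A ^+ l))) r j in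
  let X := B *m AD +
    \sum_(1 <= s < k.+1)
      (((-1) ^+ s.-1 / (s`!)%:R * (t%:C) ^+ s)
        *: (B *m A ^+ s.-1 - B *m A ^+ s *m AD)) in
  forall i j : 'I_n,
    X i j = N i j k / Delta +
      \sum_(1 <= s < k.+1)
        ((-1) ^+ s.-1 / (s`!)%:R *
          ((B *m A ^+ s.-1) i j - N i j (k + s)%N / Delta) * (t%:C) ^+ s).
Proof.
move=> Hk [k' [Hk' [H1 [H2 H3]]]] r Delta N X0 i j.
have ek := index_uniq Hk' Hk; subst k'.
have cAD : GRing.comm A AD := H3.
have H1r : A ^+ k.+1 * AD = A ^+ k := H1.
have H2r : AD * A * AD = AD := H2.
have H2' : AD * AD * A = AD by rewrite -mulrA -cAD mulrA H2r.
have ADpow : forall m, AD ^+ m.+1 * A ^+ m = AD.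
  elim => [|m IH]; first by rewrite expr1 expr0 mulr1.
  by rewrite exprS (exprSr A) !mulrA -(mulrA AD (AD ^+ m.+1)) IH H2'.
have cADk : AD * A ^+ k.+1 = A ^+ k.
  by rewrite (commrX k.+1 (commr_sym cAD)) H1r.
have cpow : forall p q, AD ^+ p * A ^+ q = A ^+ q * AD ^+ p.
  move=> p q; apply: commr_sym; apply: commrX; apply: commr_sym.
  by apply: commrX; apply: commr_sym.
set M := A ^+ k.+1.
have hr : \rank M = r := Hk.1.
have rMM : \rank (M *m M) = \rank M.
  apply/eqP; rewrite eqn_leq mxrankM_maxl /= hr /r.
  have -> : A ^+ k = M *m M *m AD ^+ k.+2.
    by rewrite !mulmxE -mulrA -cpow (ADpow k.+1) H1r.
  exact: mxrankM_maxl.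
move: (mulmx_base M); move: (col_base M) (row_base M) => Xc Yr hM.
set W := Yr *m Xc.
have hWu : W \in unitmx.
  rewrite -row_free_unit /row_free eqn_leq rank_leq_row /=.
  apply: (@leq_trans (\rank (M *m M))); first by rewrite rMM.
  have -> : M *m M = Xc *m (W *m Yr).
    by rewrite /W !mulmxA hM -mulmxA hM.
  apply: leq_trans (mxrankM_maxr _ _) _.
  exact: mxrankM_maxl.
have hD : Delta = \det W.
  by rewrite /Delta -hr -/M; have := cauchy_binet Xc Yr; rewrite hM.
have hDnz : Delta != 0 by rewrite hD -unitfE -unitmxE.
have hN : forall l, N i j (k + l)%N = Delta * (B *m A ^+ l *m AD) i j.
  move=> l.
  pose z := row i (B *m A ^+ l) *m AD ^+ k.+2 *m Xc.
  have K := key j (z *m W) hWu; rewrite hM in K.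
  have E1 : z *m W *m Yr = row i (B *m A ^+ (k + l)).
    rewrite /z /W (mulmxA _ Yr Xc) -(mulmxA _ Xc Yr) hM -(mulmxA _ Xc Yr) hM.
    have e1 : AD ^+ k.+2 *m M = AD := ADpow k.+1.
    have e2 : AD *m M = A ^+ k := cADk.
    have e3 : A ^+ l *m A ^+ k = A ^+ (k + l) by rewrite mulmxE -exprD addnC.
    by rewrite -(mulmxA (row i _)) e1 -mulmxA e2 -row_mul -mulmxA e3.
  have E2 : z *m W *m invmx W *m Yr = row i (B *m A ^+ l *m AD).
    have e1 : AD ^+ k.+2 *m M = AD := ADpow k.+1.
    by rewrite (mulmxK hWu) /z -mulmxA hM -mulmxA e1 !row_mul.
  rewrite /N -hr -E1 K E2 hD; congr (_ * _); rewrite mxE.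
  by [].
have hDiv : forall y, Delta * y / Delta = y.
  by move=> y; rewrite mulrC mulKf.
have hN0 : N i j k = Delta * (B *m AD) i j.
  by rewrite -[X in N i j X]addn0 hN expr0 mulmx1.
rewrite hN0 hDiv /X0 mxE summxE; congr (_ + _).
apply: eq_bigr => s _; rewrite hN hDiv.
rewrite !mxE; ring.
Qed.
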